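(* Let $R\ge1$, $\Gamma\ge1$, $1\le s_1\le n_1$, $1\le s_2\le n_2$, and assume $s_1/n_1\le s_2/n_2$. Then for $0<\varepsilon<6\Gamma\sqrt R$, $\log N(K^{R,\Gamma}_{s_1,s_2},\|\cdot\|_F,\varepsilon)$ is at most $$\begin{cases}R(n_1+n_2+1)\log\!\big(\frac{36\Gamma R}{\varepsilon}\big), & 0<\varepsilon<12\Gamma\sqrt{\frac{Rs_1}{n_1}},\\[4pt] \frac{144\Gamma^2R^2s_1}{\varepsilon^2}\log\!\big(\frac{9\varepsilon n_1}{6\Gamma\sqrt Rs_1}\big)+R(n_2+1)\log\!\big(\frac{36\Gamma R}{\varepsilon}\big), & 12\Gamma\sqrt{\frac{Rs_1}{n_1}}\le\varepsilon<12\Gamma\sqrt{\frac{Rs_2}{n_2}},\\[4pt] \frac{144\Gamma^2R^2(s_1+s_2)}{\varepsilon^2}\log\!\big(\frac{9\varepsilon n_1}{6\Gamma\sqrt Rs_1}\big)+R\log\!\big(\frac{18\Gamma R}{\varepsilon}\big), & 12\Gamma\sqrt{\frac{Rs_2}{n_2}}\le\varepsilon<6\Gamma\sqrt R.\end{cases}$$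
   Context: $N(M,\|\cdot\|,\varepsilon)$ is the minimal number of $\|\cdot\|$-balls of radius $\varepsilon$ needed to cover $M$. For $n\ge1,s>0$: $K_{n,s}=\{z\in\mathbb{R}^n:\|z\|_2\le1,\|z\|_1\le\sqrt s\}$. $K^{R,\Gamma}_{s_1,s_2}$ is the set of $Z\in\mathbb{R}^{n_1\times n_2}$ of the form $Z=\sum_{r=1}^R\sigma_ru^r(v^r)^T$ with $u^r\in K_{n_1,s_1}$, $v^r\in K_{n_2,s_2}$, $\|u^r\|_2=\|v^r\|_2=1$ for all $r$, and $\sigma\in\mathbb{R}^R$, $\|\sigma\|_2\le\Gamma$. *)

(* Defs.v *)
From Stdlib Require Export Reals.
Open Scope R_scope.

Fixpoint rsum (n : nat) (f : nat -> R) : R :=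
  match n with
  | O => 0
  | S m => rsum m f + f m
  end.

(* vectors of R^n are represented by u : nat -> R, only indices < n matter *)
Definition norm2 (n : nat) (u : nat -> R) : R := sqrt (rsum n (fun i => (u i) ^ 2)).
Definition norm1 (n : nat) (u : nat -> R) : R := rsum n (fun i => Rabs (u i)).

Definition K_ns (n : nat) (s : R) (z : nat -> R) : Prop :=
  norm2 n z <= 1 /\ norm1 n z <= sqrt s.

(* matrices of R^{n1 x n2}: Z : nat -> nat -> R, only i < n1, j < n2 matter *)
Definition frob (n1 n2 : nat) (Z : nat -> nat -> R) : R :=
  sqrt (rsum n1 (fun i => rsum n2 (fun j => (Z i j) ^ 2))).

Definition K_RG (Rk : nat) (Gamma : R) (n1 n2 : nat) (s1 s2 : R)
  (Z : nat -> nat -> R) : Prop :=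
  exists (sigma : nat -> R) (u v : nat -> nat -> R),
    (forall r, (r < Rk)%nat ->
       K_ns n1 s1 (u r) /\ K_ns n2 s2 (v r) /\
       norm2 n1 (u r) = 1 /\ norm2 n2 (v r) = 1) /\
    norm2 Rk sigma <= Gamma /\
    (forall i j, (i < n1)%nat -> (j < n2)%nat ->
       Z i j = rsum Rk (fun r => sigma r * u r i * v r j)).

Definition frob_covered_by (n1 n2 : nat) (M : (nat -> nat -> R) -> Prop)
  (eps : R) (k : nat) : Prop :=
  exists c : nat -> nat -> nat -> R,
    forall Z, M Z -> exists i, (i < k)%nat /\
      frob n1 n2 (fun a b => Z a b - c i a b) <= eps.

Definition is_frob_covering_number (n1 n2 : nat) (M : (nat -> nat -> R) -> Prop)
  (eps : R) (N : nat) : Prop :=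
  frob_covered_by n1 n2 M eps N /\
  (forall k, frob_covered_by n1 n2 M eps k -> (N <= k)%nat).

(* Main.v *)
Require Import Defs.
From Stdlib Require Import Reals Lra Lia Psatz ZArith Classical.
Open Scope R_scope.


Lemma rsum_ext n f g : (forall i, (i < n)%nat -> f i = g i) -> rsum n f = rsum n g.
Proof. induction n; simpl; intros H; auto. rewrite IHn; [rewrite H|]; auto; intros; apply H; lia. Qed.

Lemma rsum_le n f g : (forall i, (i < n)%nat -> f i <= g i) -> rsum n f <= rsum n g.
Proof. induction n; simpl; intros H; [lra|]. assert (rsum n f <= rsum n g) by (apply IHn; intros; apply H; lia).
 assert (f n <= g n) by (apply H; lia). lra. Qed.

Lemma rsum_plus n f g : rsum n (fun i => f i + g i) = rsum n f + rsum n g.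
Proof. induction n; simpl; [lra|]. rewrite IHn; lra. Qed.

Lemma rsum_scal n c f : rsum n (fun i => c * f i) = c * rsum n f.
Proof. induction n; simpl; [lra|]. rewrite IHn; lra. Qed.

Lemma rsum_nonneg n f : (forall i, (i < n)%nat -> 0 <= f i) -> 0 <= rsum n f.
Proof. intros H. replace 0 with (rsum n (fun _ => 0)). apply rsum_le; auto.
 clear H; induction n; simpl; auto; rewrite IHn; lra. Qed.

Lemma rsum_const0 n : rsum n (fun _ => 0) = 0.
Proof. induction n; simpl; auto; rewrite IHn; lra. Qed.

Definition dsum (n1 n2 : nat) (F : nat -> nat -> R) : R :=
  rsum n1 (fun i => rsum n2 (fun j => F i j)).

Lemma dsum_ext n1 n2 F G : (forall i j, (i < n1)%nat -> (j < n2)%nat -> F i j = G i j) ->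
  dsum n1 n2 F = dsum n1 n2 G.
Proof. intros H; unfold dsum; apply rsum_ext; intros; apply rsum_ext; auto. Qed.
Lemma dsum_le n1 n2 F G : (forall i j, (i < n1)%nat -> (j < n2)%nat -> F i j <= G i j) ->
  dsum n1 n2 F <= dsum n1 n2 G.
Proof. intros H; unfold dsum; apply rsum_le; intros; apply rsum_le; auto. Qed.
Lemma dsum_plus n1 n2 F G : dsum n1 n2 (fun i j => F i j + G i j) = dsum n1 n2 F + dsum n1 n2 G.
Proof. unfold dsum. rewrite <- rsum_plus. apply rsum_ext; intros; apply rsum_plus. Qed.
Lemma dsum_scal n1 n2 c F : dsum n1 n2 (fun i j => c * F i j) = c * dsum n1 n2 F.
Proof. unfold dsum. rewrite <- rsum_scal. apply rsum_ext; intros; apply rsum_scal. Qed.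
Lemma dsum_nonneg n1 n2 F : (forall i j, (i < n1)%nat -> (j < n2)%nat -> 0 <= F i j) -> 0 <= dsum n1 n2 F.
Proof. intros H; unfold dsum; apply rsum_nonneg; intros; apply rsum_nonneg; auto. Qed.

Lemma quad_disc A B C : (forall l, 0 <= A * l * l - 2 * B * l + C) -> 0 <= A -> B * B <= A * C.
Proof. intros H HA. destruct (Req_dec A 0) as [->|HA'].
 - destruct (Req_dec B 0) as [->|HB]; [specialize (H 0); nra|].
   specialize (H ((C + 1) / (2 * B))). exfalso.
   assert (2 * B * ((C + 1) / (2 * B)) = C + 1) by (field; auto). nra.
 - specialize (H (B / A)). assert (A * (B/A) * (B/A) = B * B / A) by (field; auto).
   assert (2 * B * (B / A) = 2 * (B * B / A)) by (field; auto).
   assert (0 < A) by lra. assert (B * B / A <= C) by nra.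
   apply Rmult_le_reg_r with (/A). apply Rinv_0_lt_compat; lra.
   replace (A * C * / A) with C by (field; auto). unfold Rdiv in *; lra.
Qed.

Lemma dsum_CS n1 n2 a b :
  dsum n1 n2 (fun i j => a i j * b i j) * dsum n1 n2 (fun i j => a i j * b i j)
  <= dsum n1 n2 (fun i j => a i j ^ 2) * dsum n1 n2 (fun i j => b i j ^ 2).
Proof.
  apply quad_disc.
  - intros l. assert (E : dsum n1 n2 (fun i j => (a i j * l - b i j) ^ 2) =
      dsum n1 n2 (fun i j => a i j ^ 2) * l * l - 2 * dsum n1 n2 (fun i j => a i j * b i j) * l
      + dsum n1 n2 (fun i j => b i j ^ 2)).
    { transitivity (dsum n1 n2 (fun i j => (l*l) * a i j ^ 2 + ((-2 * l) * (a i j * b i j) + b i j ^ 2))).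
      apply dsum_ext; intros; ring.
      rewrite !dsum_plus, !dsum_scal. ring. }
    rewrite <- E. apply dsum_nonneg; intros; apply pow2_ge_0.
  - apply dsum_nonneg; intros; nra.
Qed.

Lemma sqrt_sum_le x y : 0 <= x -> 0 <= y -> forall z, 0 <= z -> z <= x + y + 2 * sqrt x * sqrt y -> sqrt z <= sqrt x + sqrt y.
Proof. intros Hx Hy z Hz H.
 assert (Hs: 0 <= sqrt x + sqrt y) by (pose proof (sqrt_pos x); pose proof (sqrt_pos y); lra).
 rewrite <- (sqrt_pow2 (sqrt x + sqrt y)) by auto. apply sqrt_le_1_alt.
 replace ((sqrt x + sqrt y)^2) with (sqrt x * sqrt x + sqrt y * sqrt y + 2 * sqrt x * sqrt y) by ring.
 rewrite !sqrt_sqrt; auto. Qed.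

Lemma frob_triangle n1 n2 A B :
  frob n1 n2 (fun i j => A i j + B i j) <= frob n1 n2 A + frob n1 n2 B.
Proof.
  unfold frob. fold (dsum n1 n2 (fun i j => (A i j + B i j) ^ 2)).
  fold (dsum n1 n2 (fun i j => A i j ^ 2)). fold (dsum n1 n2 (fun i j => B i j ^ 2)).
  set (SA := dsum n1 n2 (fun i j => A i j ^ 2)). set (SB := dsum n1 n2 (fun i j => B i j ^ 2)).
  set (SAB := dsum n1 n2 (fun i j => A i j * B i j)).
  assert (HA : 0 <= SA) by (apply dsum_nonneg; intros; apply pow2_ge_0).
  assert (HB : 0 <= SB) by (apply dsum_nonneg; intros; apply pow2_ge_0).
  apply sqrt_sum_le; auto. apply dsum_nonneg; intros; apply pow2_ge_0.
  assert (E : dsum n1 n2 (fun i j => (A i j + B i j) ^ 2) = SA + SB + 2 * SAB).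
  { transitivity (dsum n1 n2 (fun i j => A i j ^ 2 + (B i j ^ 2 + 2 * (A i j * B i j)))).
    apply dsum_ext; intros; ring. rewrite !dsum_plus, dsum_scal. unfold SA, SB, SAB; ring. }
  rewrite E. assert (SAB <= sqrt SA * sqrt SB).
  { destruct (Rle_dec SAB 0). pose proof (sqrt_pos SA); pose proof (sqrt_pos SB); nra.
    rewrite <- sqrt_mult_alt by auto. rewrite <- (sqrt_pow2 SAB) by lra. apply sqrt_le_1_alt.
    pose proof (dsum_CS n1 n2 A B) as HC. fold SAB SA SB in HC. replace (SAB ^ 2) with (SAB * SAB) by ring. exact HC. }
  lra.
Qed.

Lemma frob_rank1 n1 n2 c a b :
  frob n1 n2 (fun i j => c * a i * b j) = Rabs c * norm2 n1 a * norm2 n2 b.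
Proof.
  unfold frob, norm2.
  assert (HA : 0 <= rsum n1 (fun i => a i ^ 2)) by (apply rsum_nonneg; intros; apply pow2_ge_0).
  assert (HB : 0 <= rsum n2 (fun i => b i ^ 2)) by (apply rsum_nonneg; intros; apply pow2_ge_0).
  assert (E : rsum n1 (fun i => rsum n2 (fun j => (c * a i * b j) ^ 2)) =
     c ^ 2 * rsum n1 (fun i => a i ^ 2) * rsum n2 (fun i => b i ^ 2)).
  { transitivity (rsum n1 (fun i => (c ^ 2 * a i ^ 2) * rsum n2 (fun j => b j ^ 2))).
    apply rsum_ext; intros. rewrite <- rsum_scal. apply rsum_ext; intros; ring.
    rewrite (rsum_ext n1 _ (fun i => rsum n2 (fun j => b j ^ 2) * (c^2 * a i ^2))) by (intros; ring).
    rewrite rsum_scal, rsum_scal. ring. }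
  rewrite E. rewrite sqrt_mult_alt by (apply Rmult_le_pos; auto; apply pow2_ge_0).
  rewrite sqrt_mult_alt by apply pow2_ge_0.
  f_equal. f_equal. rewrite <- (sqrt_pow2 (Rabs c)) by apply Rabs_pos. f_equal. idtac.
  unfold Rabs; destruct (Rcase_abs c); ring.
Qed.

Lemma rsum_CS n a b :
  rsum n (fun i => a i * b i) * rsum n (fun i => a i * b i)
  <= rsum n (fun i => a i ^ 2) * rsum n (fun i => b i ^ 2).
Proof.
  apply quad_disc.
  - intros l. assert (E : rsum n (fun i => (a i * l - b i) ^ 2) =
      rsum n (fun i => a i ^ 2) * l * l - 2 * rsum n (fun i => a i * b i) * l
      + rsum n (fun i => b i ^ 2)).
    { transitivity (rsum n (fun i => (l*l) * a i ^ 2 + ((-2 * l) * (a i * b i) + b i ^ 2))).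
      apply rsum_ext; intros; ring.
      rewrite !rsum_plus, !rsum_scal. ring. }
    rewrite <- E. apply rsum_nonneg; intros; apply pow2_ge_0.
  - apply rsum_nonneg; intros; apply pow2_ge_0.
Qed.

Lemma rsum_one n : rsum n (fun _ => 1) = INR n.
Proof. induction n; simpl rsum; [simpl; lra|]. rewrite IHn, S_INR; lra. Qed.

Lemma norm2_nonneg n x : 0 <= norm2 n x.
Proof. apply sqrt_pos. Qed.
Lemma norm1_nonneg n x : 0 <= norm1 n x.
Proof. apply rsum_nonneg; intros; apply Rabs_pos. Qed.

Lemma norm1_le n x : norm1 n x <= sqrt (INR n) * norm2 n x.
Proof.
  unfold norm2. rewrite <- sqrt_mult_alt by apply pos_INR.
  rewrite <- (sqrt_pow2 (norm1 n x)) by apply norm1_nonneg. apply sqrt_le_1_alt.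
  pose proof (rsum_CS n (fun i => Rabs (x i)) (fun _ => 1)) as H. cbv beta in H.
  rewrite (rsum_ext n (fun i => Rabs (x i) * 1) (fun i => Rabs (x i))) in H by (intros; ring).
  rewrite (rsum_ext n (fun i => Rabs (x i) ^ 2) (fun i => x i ^ 2)) in H.
  2:{ intros. unfold Rabs; destruct (Rcase_abs (x i)); ring. }
  rewrite (rsum_ext n (fun _ => 1 ^ 2) (fun _ => 1)) in H by (intros; ring).
  rewrite rsum_one in H. unfold norm1. replace (rsum n (fun i => Rabs (x i)) ^ 2) with
   (rsum n (fun i => Rabs (x i)) * rsum n (fun i => Rabs (x i))) by ring. lra.
Qed.

Lemma frob_ext n1 n2 A B : (forall i j, A i j = B i j) -> frob n1 n2 A = frob n1 n2 B.
Proof. intros H. unfold frob. f_equal. apply rsum_ext; intros; apply rsum_ext; intros; rewrite H; auto. Qed.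

Definition mat (Rk : nat) (sg : nat -> R) (u v : nat -> nat -> R) (i j : nat) : R :=
  rsum Rk (fun r => sg r * u r i * v r j).

Lemma frob_zero n1 n2 : frob n1 n2 (fun _ _ => 0) = 0.
Proof. unfold frob. rewrite (rsum_ext n1 _ (fun _ => 0)). rewrite rsum_const0. apply sqrt_0.
 intros. rewrite (rsum_ext n2 _ (fun _ => 0)). apply rsum_const0. intros; ring. Qed.

Lemma pert n1 n2 Rk sg sg' u u' v v' du dv :
  (forall r, (r < Rk)%nat -> norm2 n1 (u r) <= 1 /\ norm2 n2 (v r) <= 1 /\
     norm2 n1 (u' r) <= 1 /\ norm2 n2 (v' r) <= 1 /\
     norm2 n1 (fun i => u r i - u' r i) <= du /\ norm2 n2 (fun j => v r j - v' r j) <= dv) ->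
  frob n1 n2 (fun i j => mat Rk sg u v i j - mat Rk sg' u' v' i j)
  <= (du + dv) * rsum Rk (fun r => Rabs (sg r)) + rsum Rk (fun r => Rabs (sg r - sg' r)).
Proof.
  induction Rk; intros H.
  - unfold mat; simpl. rewrite (frob_ext _ _ _ (fun _ _ => 0)) by (intros; simpl; ring).
    rewrite frob_zero. lra.
  - destruct (H Rk ltac:(lia)) as (H1 & H2 & H3 & H4 & H5 & H6).
    assert (IH := IHRk ltac:(intros; apply H; lia)).
    rewrite (frob_ext _ _ _ (fun i j => (mat Rk sg u v i j - mat Rk sg' u' v' i j) +
       ((sg Rk * (u Rk i - u' Rk i) * v Rk j + sg Rk * u' Rk i * (v Rk j - v' Rk j))
        + (sg Rk - sg' Rk) * u' Rk i * v' Rk j)))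
      by (intros; unfold mat; simpl; ring).
    eapply Rle_trans; [apply frob_triangle|].
    eapply Rle_trans; [apply Rplus_le_compat_l, frob_triangle|].
    eapply Rle_trans; [apply Rplus_le_compat_l, Rplus_le_compat_l; rewrite frob_rank1; apply Rle_refl|].
    eapply Rle_trans; [apply Rplus_le_compat_l, Rplus_le_compat_r, frob_triangle|].
    rewrite (frob_rank1 n1 n2 (sg Rk) (fun i => u Rk i - u' Rk i) (v Rk)).
    rewrite (frob_rank1 n1 n2 (sg Rk) (u' Rk) (fun j => v Rk j - v' Rk j)).
    simpl rsum.
    pose proof (Rabs_pos (sg Rk)). pose proof (Rabs_pos (sg Rk - sg' Rk)).
    pose proof (norm2_nonneg n1 (fun i => u Rk i - u' Rk i)).
    pose proof (norm2_nonneg n2 (fun j => v Rk j - v' Rk j)).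
    pose proof (norm2_nonneg n2 (v Rk)). pose proof (norm2_nonneg n1 (u' Rk)).
    pose proof (norm2_nonneg n2 (v' Rk)).
    assert (Rabs (sg Rk) * norm2 n1 (fun i => u Rk i - u' Rk i) * norm2 n2 (v Rk) <= Rabs (sg Rk) * du).
    { rewrite Rmult_assoc. apply Rmult_le_compat_l; auto. nra. }
    assert (Rabs (sg Rk) * norm2 n1 (u' Rk) * norm2 n2 (fun j => v Rk j - v' Rk j) <= Rabs (sg Rk) * dv).
    { rewrite Rmult_assoc. apply Rmult_le_compat_l; auto. nra. }
    assert (Rabs (sg Rk - sg' Rk) * norm2 n1 (u' Rk) * norm2 n2 (v' Rk) <= Rabs (sg Rk - sg' Rk)).
    { rewrite Rmult_assoc. rewrite <- (Rmult_1_r (Rabs (sg Rk - sg' Rk))) at 2. apply Rmult_le_compat_l; auto. nra. }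
    nra.
Qed.


Definition net {X : Type} (k : nat) (A : X -> Prop) (Q : X -> X -> Prop) : Prop :=
  exists c : nat -> X, forall x, A x -> exists i, (i < k)%nat /\ Q x (c i).

Lemma net_map {X Y : Type} k (A : X -> Prop) Q (B : Y -> Prop) Q' (F : X -> Y) :
  net k A Q -> (forall y, B y -> exists x, A x /\ forall c, Q x c -> Q' y (F c)) -> net k B Q'.
Proof. intros [c Hc] H. exists (fun i => F (c i)). intros y Hy. destruct (H y Hy) as [x [Hx HQ]].
 destruct (Hc x Hx) as [i [Hi Hq]]. exists i; split; auto. Qed.

Lemma net_sub {X : Type} k (A B : X -> Prop) Q : net k A Q -> (forall x, B x -> A x) -> net k B Q.
Proof. intros [c Hc] H. exists c. intros x Hx. apply Hc; auto. Qed.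

Lemma net_le {X : Type} k k' (A : X -> Prop) Q : (k <= k')%nat -> net k A Q -> net k' A Q.
Proof. intros Hk [c Hc]. exists c. intros x Hx. destruct (Hc x Hx) as [i [Hi Hq]]. exists i; split; auto; lia. Qed.

Lemma net_union {X : Type} k1 k2 (A B : X -> Prop) Q :
  net k1 A Q -> net k2 B Q -> net (k1 + k2) (fun x => A x \/ B x) Q.
Proof. intros [c1 H1] [c2 H2]. exists (fun i => if Nat.ltb i k1 then c1 i else c2 (i - k1)%nat).
 intros x [Hx|Hx].
 - destruct (H1 x Hx) as [i [Hi Hq]]. exists i. split; [lia|]. destruct (Nat.ltb_spec i k1); [auto|lia].
 - destruct (H2 x Hx) as [i [Hi Hq]]. exists (k1 + i)%nat. split; [lia|].
   destruct (Nat.ltb_spec (k1 + i) k1); [lia|]. replace (k1 + i - k1)%nat with i by lia. auto.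
Qed.

Lemma net_prod {X Y : Type} k1 k2 (A : X -> Prop) (B : Y -> Prop) Q1 Q2 :
  net k1 A Q1 -> net k2 B Q2 ->
  net (k1 * k2) (fun p => A (fst p) /\ B (snd p)) (fun p q => Q1 (fst p) (fst q) /\ Q2 (snd p) (snd q)).
Proof. intros [c1 H1] [c2 H2]. exists (fun i => (c1 (i / k2)%nat, c2 (i mod k2)%nat)).
 intros [x y] [Hx Hy]. simpl in *. destruct (H1 x Hx) as [i [Hi Hq]]. destruct (H2 y Hy) as [j [Hj Hq2]].
 exists (i * k2 + j)%nat. split; [nia|]. simpl.
 rewrite Nat.div_add_l by lia. rewrite Nat.div_small by lia. rewrite Nat.add_0_r.
 rewrite Nat.add_comm, Nat.Div0.mod_add, Nat.mod_small by lia. auto.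
Qed.

Lemma net_pow {X : Type} k (A : X -> Prop) Q (x0 : X) : net k A Q -> forall N,
  net (k ^ N) (fun f : nat -> X => forall r, (r < N)%nat -> A (f r))
              (fun f g => forall r, (r < N)%nat -> Q (f r) (g r)).
Proof. intros Hn N. induction N.
 - exists (fun _ _ => x0). intros f _. exists 0%nat. split; simpl; [lia|]. intros; lia.
 - rewrite Nat.pow_succ_r', Nat.mul_comm.
   apply (net_map _ _ _ _ _ (fun p : (nat -> X) * X => fun r => if Nat.ltb r N then fst p r else snd p)
    (net_prod _ _ _ _ _ _ IHN Hn)).
   intros f Hf. exists (f, f N). simpl. split; [split|].
   + intros; apply Hf; lia.
   + apply Hf; lia.
   + intros [g x] [Hg Hx]; simpl in *. intros r Hr. destruct (Nat.ltb_spec r N).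
     apply Hg; auto. replace r with N by lia. auto.
Qed.

Fixpoint natsum (n : nat) (f : nat -> nat) : nat :=
  match n with O => O | S m => (natsum m f + f m)%nat end.

Definition Lset (n m : nat) (a : nat -> Z) : Prop := (natsum n (fun j => Z.abs_nat (a j)) <= m)%nat.
Definition Qeq (n : nat) (a b : nat -> Z) : Prop := forall j, (j < n)%nat -> a j = b j.

Fixpoint sb (f : nat -> nat) (m b : nat) : nat :=
  match b with O => O | S b' => (sb f m b' + 2 * f (m - S b'))%nat end.
Fixpoint lat (n m : nat) : nat :=
  match n with O => 1%nat | S n' => (lat n' m + sb (lat n') m m)%nat end.

Lemma net_piece n m' z : net (lat n m') (Lset n m') (Qeq n) ->
  net (lat n m') (fun a => a n = z /\ Lset n m' a) (Qeq (S n)).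
Proof. intros H. apply (net_map _ _ _ _ _ (fun c j => if Nat.eqb j n then z else c j) H).
 intros a [Ha HL]. exists a. split; auto. intros c Hc j Hj.
 destruct (Nat.eqb_spec j n). subst; auto. apply Hc; lia. Qed.

Lemma net_lat n : forall m, net (lat n m) (Lset n m) (Qeq n).
Proof.
  induction n; intros m.
  - exists (fun _ _ => 0%Z). intros a _. exists 0%nat. split; simpl; [lia|]. intros j Hj; lia.
  - assert (Hsb : forall b, net (sb (lat n) m b)
       (fun a => Lset (S n) m a /\ (1 <= Z.abs_nat (a n) <= b)%nat) (Qeq (S n))).
    { induction b.
      - exists (fun _ _ => 0%Z). intros a [_ H]; lia.
      - change (sb (lat n) m (S b)) with (sb (lat n) m b + 2 * lat n (m - S b))%nat. replace (2 * lat n (m - S b))%nat with (lat n (m - S b) + lat n (m - S b))%nat by lia.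
        rewrite Nat.add_assoc.
        eapply net_sub; [apply net_union; [apply net_union; [apply IHb| apply (net_piece n (m - S b) (Z.of_nat (S b)) (IHn _))] | apply (net_piece n (m - S b) (- Z.of_nat (S b))%Z (IHn _))]|].
        intros a [HL Hb].
        destruct (Nat.eq_dec (Z.abs_nat (a n)) (S b)) as [E|E].
        + unfold Lset in *. simpl in HL. rewrite E in HL.
          assert (natsum n (fun j => Z.abs_nat (a j)) <= m - S b)%nat by lia.
          assert (a n = Z.of_nat (S b) \/ a n = (- Z.of_nat (S b))%Z) by lia.
          destruct H0; [left; right|right]; split; auto.
        + left; left; split; [auto|lia]. }
    simpl lat. eapply net_sub; [apply net_union; [apply (net_piece n m 0%Z (IHn m)) | apply (Hsb m)]|].
    intros a HL.
    destruct (Z.eq_dec (a n) 0) as [E|E].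
    + left. split; auto. unfold Lset in *; simpl in HL; lia.
    + right. split; auto. unfold Lset in *; simpl in HL; lia.
Qed.

Lemma geo_sum t b : rsum b (fun i => t ^ S i) * (1 - t) = t - t ^ S b.
Proof. induction b; cbn [rsum]. simpl; ring. rewrite Rmult_plus_distr_r, IHb. simpl; ring. Qed.

Lemma geo_bound t b : 0 <= t < 1 -> rsum b (fun i => t ^ S i) <= t / (1 - t).
Proof. intros Ht. pose proof (geo_sum t b). assert (0 <= t ^ S b) by (apply pow_le; lra).
 apply Rmult_le_reg_r with (1 - t); [lra|]. unfold Rdiv. rewrite Rmult_assoc, Rinv_l by lra. lra. Qed.

Lemma sb_bound (f : nat -> nat) t G : 0 < t ->
  (forall m', INR (f m') * t ^ m' <= G) -> forall b m, (b <= m)%nat ->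
  INR (sb f m b) * t ^ m <= 2 * G * rsum b (fun i => t ^ S i).
Proof. intros Ht Hf. induction b; intros m Hb.
 - simpl. lra.
 - change (sb f m (S b)) with (sb f m b + 2 * f (m - S b))%nat.
   rewrite plus_INR, mult_INR. cbn [rsum].
   assert (IH := IHb m ltac:(lia)).
   assert (E : t ^ m = t ^ (m - S b) * t ^ S b) by (rewrite <- pow_add; f_equal; lia).
   assert (H2 := Hf (m - S b)%nat). assert (0 < t ^ S b) by (apply pow_lt; lra).
   assert (INR (f (m - S b)%nat) * t ^ m <= G * t ^ S b) by (rewrite E, <- Rmult_assoc; apply Rmult_le_compat_r; lra).
   replace (INR 2) with 2 by (simpl; ring). rewrite Rmult_plus_distr_r. rewrite Rmult_plus_distr_l. rewrite Rmult_assoc. lra.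
Qed.

Lemma lat_bound t : 0 < t < 1 -> forall n m, INR (lat n m) * t ^ m <= ((1 + t) / (1 - t)) ^ n.
Proof. intros Ht n. induction n; intros m.
 - simpl. assert (t ^ m <= 1) by (rewrite <- (pow1 m); apply pow_incr; lra). lra.
 - simpl lat. rewrite plus_INR. assert (HS := sb_bound (lat n) t _ ltac:(lra) IHn m m (le_n m)).
   assert (Hg := geo_bound t m ltac:(lra)). assert (H0 := IHn m).
   assert (0 <= ((1 + t) / (1 - t)) ^ n) by (apply pow_le; unfold Rdiv; apply Rmult_le_pos; [lra|]; apply Rlt_le, Rinv_0_lt_compat; lra).
   replace (((1 + t) / (1 - t)) ^ S n) with (((1 + t) / (1 - t)) ^ n * (1 + 2 * (t / (1 - t)))).
   2:{ simpl. field. lra. }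
   assert (2 * ((1 + t) / (1 - t)) ^ n * rsum m (fun i => t ^ S i) <= ((1 + t) / (1 - t)) ^ n * (2 * (t / (1 - t)))) by nra.
   nra.
Qed.

Lemma lat_pos n m : (1 <= lat n m)%nat.
Proof. induction n; simpl; lia. Qed.


Definition tr (y : R) : Z := if Rle_dec 0 y then Int_part y else (- Int_part (- y))%Z.

Lemma Int_part_nonneg y : 0 <= y -> 0 <= IZR (Int_part y) <= y.
Proof. intros Hy. destruct (base_Int_part y) as [H1 H2]. split; auto.
 assert (-1 < Int_part y)%Z by (apply lt_IZR; lra). apply IZR_le. lia. Qed.

Lemma Int_part_gt y : y - 1 < IZR (Int_part y).
Proof. destruct (base_Int_part y). lra. Qed.

Lemma tr_spec y : Rabs (IZR (tr y)) <= Rabs y /\ Rabs (y - IZR (tr y)) <= 1 /\ Rabs (y - IZR (tr y)) <= Rabs y.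
Proof. unfold tr. destruct (Rle_dec 0 y).
 - destruct (Int_part_nonneg y r). pose proof (Int_part_gt y).
   unfold Rabs; repeat destruct Rcase_abs; repeat split; lra.
 - rewrite opp_IZR. destruct (Int_part_nonneg (-y) ltac:(lra)). pose proof (Int_part_gt (-y)).
   unfold Rabs; repeat destruct Rcase_abs; repeat split; lra.
Qed.

Lemma INR_abs_nat z : INR (Z.abs_nat z) = Rabs (IZR z).
Proof. rewrite INR_IZR_INZ, Nat2Z.inj_abs_nat, abs_IZR. auto. Qed.

Lemma natsum_INR n f : INR (natsum n f) = rsum n (fun j => INR (f j)).
Proof. induction n; simpl natsum; cbn [rsum]; [auto|]. rewrite plus_INR, IHn; auto. Qed.

Lemma sq_abs x : x ^ 2 = Rabs x ^ 2.
Proof. unfold Rabs; destruct (Rcase_abs x); ring. Qed.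

Lemma sq_le_abs a b : Rabs a <= Rabs b -> a ^ 2 <= b ^ 2.
Proof. intros H. rewrite (sq_abs a), (sq_abs b). apply pow_incr. split; auto. apply Rabs_pos. Qed.

Definition ctr (h : R) (x : nat -> R) (j : nat) : R := h * IZR (tr (x j / h)).

Lemma ctr_coord h x j : 0 < h ->
  Rabs (ctr h x j) <= Rabs (x j) /\ (x j - ctr h x j) ^ 2 <= h ^ 2 /\ (x j - ctr h x j) ^ 2 <= h * Rabs (x j).
Proof. intros Hh. destruct (tr_spec (x j / h)) as (H1 & H2 & H3). unfold ctr.
 set (a := IZR (tr (x j / h))) in *.
 assert (E : x j - h * a = h * (x j / h - a)) by (field; lra).
 assert (Ex : x j = h * (x j / h)) by (field; lra).
 assert (Rabs (h * a) <= Rabs (x j)) by (rewrite Rabs_mult, Rabs_right, Ex, Rabs_mult, (Rabs_right h) by lra; apply Rmult_le_compat_l; lra).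
 assert (Hd1 : Rabs (x j - h * a) <= h) by (rewrite E, Rabs_mult, Rabs_right by lra; nra).
 assert (Hd2 : Rabs (x j - h * a) <= Rabs (x j)) by (rewrite E, Rabs_mult, Rabs_right by lra; rewrite Ex at 2; rewrite Rabs_mult, (Rabs_right h) by lra; apply Rmult_le_compat_l; lra).
 split; auto. split.
 - apply sq_le_abs. rewrite (Rabs_right h) by lra. auto.
 - rewrite sq_abs. pose proof (Rabs_pos (x j - h * a)). simpl. nra.
Qed.

Lemma lattice_net n m h M (A : (nat -> R) -> Prop) : 0 < h ->
  (forall x, A x -> norm1 n x <= h * M) -> (forall p : nat, INR p <= M -> (p <= m)%nat) ->
  net (lat n m) A (fun x c => norm2 n c <= norm2 n x /\
     rsum n (fun j => (x j - c j) ^ 2) <= INR n * h ^ 2 /\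
     rsum n (fun j => (x j - c j) ^ 2) <= h * norm1 n x).
Proof. intros Hh HA Hm.
 apply (net_map _ _ _ _ _ (fun cz j => h * IZR (cz j)) (net_lat n m)).
 intros x Hx. exists (fun j => tr (x j / h)). split.
 - unfold Lset. apply Hm. rewrite natsum_INR.
   apply Rle_trans with (norm1 n x / h).
   + unfold norm1. unfold Rdiv. rewrite Rmult_comm, <- rsum_scal. apply rsum_le. intros j _.
     rewrite INR_abs_nat. destruct (tr_spec (x j / h)) as [H1 _].
     unfold Rdiv in H1. rewrite Rabs_mult, (Rabs_right (/ h)) in H1. lra.
     apply Rle_ge, Rlt_le, Rinv_0_lt_compat; auto.
   + apply Rmult_le_reg_r with h; auto. unfold Rdiv. rewrite Rmult_assoc, Rinv_l by lra.
     rewrite Rmult_1_r, Rmult_comm. apply HA; auto.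
 - intros cz Hc.
   assert (Hr : forall F : R -> R, rsum n (fun j => F (x j - h * IZR (cz j))) = rsum n (fun j => F (x j - ctr h x j))).
   { intros F. apply rsum_ext. intros j Hj. unfold ctr. rewrite (Hc j Hj). auto. }
   repeat split.
   + unfold norm2. apply sqrt_le_1_alt.
     rewrite (rsum_ext n _ (fun j => ctr h x j ^ 2)) by (intros j Hj; unfold ctr; rewrite (Hc j Hj); auto).
     apply rsum_le. intros j _. apply sq_le_abs. apply ctr_coord; auto.
   + rewrite (Hr (fun z => z ^ 2)). rewrite <- rsum_one, Rmult_comm, <- rsum_scal.
     apply rsum_le. intros j _. rewrite Rmult_1_r. apply ctr_coord; auto.
   + rewrite (Hr (fun z => z ^ 2)). unfold norm1. rewrite <- rsum_scal.
     apply rsum_le. intros j _. apply ctr_coord; auto.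
Qed.


Lemma net_weak {X : Type} k (A B : X -> Prop) (Q Q' : X -> X -> Prop) : net k A Q ->
  (forall x, B x -> A x) -> (forall x c, B x -> Q x c -> Q' x c) -> net k B Q'.
Proof. intros [c Hc] H1 H2. exists c. intros x Hx. destruct (Hc x (H1 x Hx)) as [i [Hi Hq]]. exists i; split; auto. Qed.

Lemma ln_le x y : 0 < x -> x <= y -> ln x <= ln y.
Proof. intros Hx Hy. destruct (Req_dec x y). subst; lra. apply Rlt_le, ln_increasing; lra. Qed.

Lemma ln_le_sub1 x : 0 < x -> ln x <= x - 1.
Proof. intros Hx. rewrite <- (ln_exp (x - 1)). apply ln_le; auto.
 destruct (Req_dec (x - 1) 0). rewrite H, exp_0; lra. pose proof (exp_ineq1 (x - 1) H). lra. Qed.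

Lemma exp_pow x m : exp x ^ m = exp (INR m * x).
Proof. induction m. simpl. rewrite Rmult_0_l, exp_0; auto.
 rewrite S_INR. simpl pow. rewrite IHm. rewrite <- exp_plus. f_equal; ring. Qed.

Lemma exp_le' x y : x <= y -> exp x <= exp y.
Proof. intros H. destruct (Rle_lt_or_eq_dec _ _ H). apply Rlt_le, exp_increasing; auto. subst; lra. Qed.

Lemma ln_nonneg x : 1 <= x -> 0 <= ln x.
Proof. intros H. rewrite <- ln_1. apply ln_le; lra. Qed.

Lemma floor_prop M : 0 <= M -> INR (Z.to_nat (Int_part M)) <= M /\
  forall p : nat, INR p <= M -> (p <= Z.to_nat (Int_part M))%nat.
Proof. intros HM. destruct (Int_part_nonneg M HM) as [H1 H2].
 assert (0 <= Int_part M)%Z by (apply le_IZR; auto).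
 split.
 - rewrite INR_IZR_INZ, Z2Nat.id by auto. auto.
 - intros p Hp. pose proof (Int_part_gt M). rewrite INR_IZR_INZ in Hp.
   assert (Z.of_nat p - 1 < Int_part M)%Z. { apply lt_IZR. rewrite minus_IZR. simpl. lra. }
   lia.
Qed.

Lemma vol_net n rho d : 0 < rho -> 0 < d -> exists k, (1 <= k)%nat /\
  ln (INR k) <= INR n * ln (exp 1 * (1 + 2 / d)) /\
  net k (fun x => norm2 n x <= rho) (fun x c => norm2 n c <= rho /\ norm2 n (fun j => x j - c j) <= rho * d).
Proof. intros Hr Hd.
 assert (Hlog : 0 <= ln (exp 1 * (1 + 2 / d))).
 { apply ln_nonneg. pose proof (exp_ineq1 1 ltac:(lra)). assert (0 < 2 / d) by (unfold Rdiv; apply Rmult_lt_0_compat; [lra|apply Rinv_0_lt_compat; lra]). nra. }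
 destruct n as [|n'].
 - exists 1%nat. split; [lia|]. split. simpl. rewrite ln_1. lra.
   exists (fun _ _ => 0). intros x Hx. exists 0%nat. split; [lia|].
   unfold norm2; simpl. rewrite sqrt_0. split; nra.
 - set (n := S n'). assert (Hn : 0 < INR n) by (apply lt_0_INR; unfold n; lia).
   assert (Hsn : 0 < sqrt (INR n)) by (apply sqrt_lt_R0; auto).
   set (M := INR n / d). assert (HM : 0 <= M) by (unfold M; unfold Rdiv; apply Rmult_le_pos; [lra|apply Rlt_le, Rinv_0_lt_compat; lra]).
   destruct (floor_prop M HM) as [Hm1 Hm2]. set (m := Z.to_nat (Int_part M)) in *.
   set (h := rho * d / sqrt (INR n)).
   assert (Hh : 0 < h) by (unfold h; unfold Rdiv; apply Rmult_lt_0_compat; [nra|apply Rinv_0_lt_compat; auto]).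
   assert (EhM : h * M = rho * sqrt (INR n)).
   { unfold h, M. rewrite <- (sqrt_sqrt (INR n)) at 2 by lra. field. split; lra. }
   exists (lat n m). split; [apply lat_pos|]. split.
   + set (t := / (1 + d)). assert (Ht : 0 < t < 1).
     { unfold t. split. apply Rinv_0_lt_compat; lra. rewrite <- Rinv_1. apply Rinv_lt_contravar; lra. }
     pose proof (lat_bound t Ht n m) as HL.
     assert (Eg : (1 + t) / (1 - t) = 1 + 2 / d) by (unfold t; field; lra).
     rewrite Eg in HL.
     assert (Etm : t ^ m * (1 + d) ^ m = 1) by (rewrite <- Rpow_mult_distr; unfold t; rewrite Rinv_l by lra; apply pow1).
     assert (Hdm : (1 + d) ^ m <= exp 1 ^ n).
     { apply Rle_trans with (exp d ^ m). apply pow_incr. split; [lra|]. pose proof (exp_ineq1 d ltac:(lra)); lra.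
       rewrite !exp_pow. apply exp_le'.
       replace (INR n * 1) with (d * M) by (unfold M; field; lra). nra. }
     assert (Hpos : 0 < (1 + d) ^ m) by (apply pow_lt; lra).
     assert (HL2 : INR (lat n m) <= (1 + 2 / d) ^ n * exp 1 ^ n).
     { apply Rle_trans with ((1 + 2 / d) ^ n * (1 + d) ^ m).
       - replace (INR (lat n m)) with (INR (lat n m) * t ^ m * (1 + d) ^ m) by (rewrite Rmult_assoc, Etm; ring).
         apply Rmult_le_compat_r; lra.
       - apply Rmult_le_compat_l; auto. apply pow_le. assert (0 < 2/d) by (unfold Rdiv; apply Rmult_lt_0_compat; [lra|apply Rinv_0_lt_compat; lra]). lra. }
     rewrite <- Rpow_mult_distr, Rmult_comm in HL2.
     rewrite <- ln_pow. apply ln_le; auto. pose proof (lat_pos n m). apply lt_0_INR; lia.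
     apply Rmult_lt_0_compat. apply exp_pos. assert (0 < 2/d) by (unfold Rdiv; apply Rmult_lt_0_compat; [lra|apply Rinv_0_lt_compat; lra]). lra.
   + eapply net_weak; [apply (lattice_net n m h M (fun x => norm2 n x <= rho) Hh)| |].
     * intros x Hx. rewrite EhM. eapply Rle_trans; [apply norm1_le|]. rewrite Rmult_comm. apply Rmult_le_compat_r; lra.
     * intros p Hp. apply Hm2. auto.
     * auto.
     * intros x c Hx (H1 & H2 & H3). split; [lra|].
       unfold norm2. rewrite <- (sqrt_pow2 (rho * d)) by nra. apply sqrt_le_1_alt.
       eapply Rle_trans; [apply H2|]. unfold h. right. field_simplify. rewrite pow2_sqrt by lra. field. lra. lra.
Qed.

Lemma maurey_net n s dl A : 1 <= s -> 0 < dl -> 3 <= A -> exists k, (1 <= k)%nat /\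
  ln (INR k) <= (s / dl ^ 2 + 1) * ln A + 3 * INR n / A /\
  net k (fun x => norm2 n x <= 1 /\ norm1 n x <= sqrt s)
        (fun x c => norm2 n c <= 1 /\ norm2 n (fun j => x j - c j) <= dl).
Proof. intros Hs Hd HA.
 set (X := s / dl ^ 2).
 assert (HX : 0 < X) by (unfold X; unfold Rdiv; apply Rmult_lt_0_compat; [lra|apply Rinv_0_lt_compat; apply pow_lt; lra]).
 destruct (archimed X) as [Hu1 Hu2].
 assert (Hup : (0 <= up X)%Z) by (apply le_IZR; lra).
 set (m := Z.to_nat (up X)).
 assert (Em : INR m = IZR (up X)) by (unfold m; rewrite INR_IZR_INZ, Z2Nat.id; auto).
 assert (Hm0 : 0 < INR m) by lra.
 assert (Hsq : 0 < sqrt s) by (apply sqrt_lt_R0; lra).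
 set (h := sqrt s / INR m).
 assert (Hh : 0 < h) by (unfold h; unfold Rdiv; apply Rmult_lt_0_compat; [lra|apply Rinv_0_lt_compat; auto]).
 exists (lat n m). split; [apply lat_pos|]. split.
 - set (t := / A). assert (Ht : 0 < t < 1).
   { unfold t. split. apply Rinv_0_lt_compat; lra. rewrite <- Rinv_1. apply Rinv_lt_contravar; lra. }
   pose proof (lat_bound t Ht n m) as HL.
   assert (Eg : (1 + t) / (1 - t) = (A + 1) / (A - 1)) by (unfold t; field; lra).
   rewrite Eg in HL.
   assert (Etm : t ^ m * A ^ m = 1) by (rewrite <- Rpow_mult_distr; unfold t; rewrite Rinv_l by lra; apply pow1).
   assert (Hg : 0 < (A + 1) / (A - 1)) by (unfold Rdiv; apply Rmult_lt_0_compat; [lra|apply Rinv_0_lt_compat; lra]).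
   assert (HAm : 0 < A ^ m) by (apply pow_lt; lra).
   assert (HL2 : INR (lat n m) <= ((A + 1) / (A - 1)) ^ n * A ^ m).
   { replace (INR (lat n m)) with (INR (lat n m) * t ^ m * A ^ m) by (rewrite Rmult_assoc, Etm; ring).
     apply Rmult_le_compat_r; lra. }
   assert (Hk : 0 < INR (lat n m)) by (pose proof (lat_pos n m); apply lt_0_INR; lia).
   eapply Rle_trans; [apply ln_le; [exact Hk| exact HL2]|].
   rewrite ln_mult by (apply pow_lt; lra). rewrite !ln_pow by lra.
   assert (Hln : ln ((A + 1) / (A - 1)) <= 3 / A).
   { eapply Rle_trans; [apply ln_le_sub1; auto|]. apply Rmult_le_reg_r with (A * (A - 1)). nra.
     replace (((A + 1) / (A - 1) - 1) * (A * (A - 1))) with (2 * A) by (field; lra).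
     replace (3 / A * (A * (A - 1))) with (3 * (A - 1)) by (field; lra). lra. }
   assert (HlA : 0 <= ln A) by (apply ln_nonneg; lra).
   assert (INR m <= X + 1) by lra.
   assert (INR n * ln ((A + 1) / (A - 1)) <= 3 * INR n / A).
   { replace (3 * INR n / A) with (INR n * (3 / A)) by (field; lra). apply Rmult_le_compat_l; auto. apply pos_INR. }
   fold X. nra.
 - eapply net_weak; [apply (lattice_net n m h (INR m) (fun x => norm2 n x <= 1 /\ norm1 n x <= sqrt s) Hh)| |].
   + intros x [_ Hx]. unfold h. replace (sqrt s / INR m * INR m) with (sqrt s) by (field; lra). auto.
   + intros p Hp. apply INR_le; auto.
   + auto.
   + intros x c [Hx1 Hx2] (H1 & H2 & H3). split; [lra|].
     unfold norm2. rewrite <- (sqrt_pow2 dl) by lra. apply sqrt_le_1_alt.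
     eapply Rle_trans; [apply H3|]. apply Rle_trans with (h * sqrt s). apply Rmult_le_compat_l; lra.
     unfold h. replace (sqrt s / INR m * sqrt s) with (s / INR m).
     2:{ rewrite <- (sqrt_sqrt s) at 1 by lra. field. lra. }
     apply Rmult_le_reg_r with (INR m / dl ^ 2). apply Rmult_lt_0_compat; auto. apply Rinv_0_lt_compat, pow_lt; lra.
     replace (s / INR m * (INR m / dl ^ 2)) with X by (unfold X; field; lra).
     replace (dl ^ 2 * (INR m / dl ^ 2)) with (INR m) by (field; lra). lra.
Qed.


Lemma frob_ext_b n1 n2 A B : (forall i j, (i < n1)%nat -> (j < n2)%nat -> A i j = B i j) -> frob n1 n2 A = frob n1 n2 B.
Proof. intros H. unfold frob. f_equal. apply rsum_ext; intros; apply rsum_ext; intros; rewrite H; auto. Qed.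

Lemma cover_from_nets Rk G n1 n2 s1 s2 eps ku kv ks du dv ds :
  net ku (fun u => norm2 n1 u <= 1 /\ norm1 n1 u <= sqrt s1)
         (fun u c => norm2 n1 c <= 1 /\ norm2 n1 (fun j => u j - c j) <= du) ->
  net kv (fun v => norm2 n2 v <= 1 /\ norm1 n2 v <= sqrt s2)
         (fun v c => norm2 n2 c <= 1 /\ norm2 n2 (fun j => v j - c j) <= dv) ->
  net ks (fun sg => norm2 Rk sg <= G)
         (fun sg c => norm2 Rk c <= G /\ norm2 Rk (fun j => sg j - c j) <= ds) ->
  0 <= du -> 0 <= dv ->
  (du + dv) * (sqrt (INR Rk) * G) + sqrt (INR Rk) * ds <= eps ->
  frob_covered_by n1 n2 (K_RG Rk G n1 n2 s1 s2) eps (ku ^ Rk * kv ^ Rk * ks).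
Proof. intros Hu Hv Hs Hdu Hdv Heps.
 pose proof (net_prod _ _ _ _ _ _ (net_prod _ _ _ _ _ _ (net_pow _ _ _ (fun _ => 0) Hu Rk) (net_pow _ _ _ (fun _ => 0) Hv Rk)) Hs) as [cc Hcc].
 exists (fun i => mat Rk (snd (cc i)) (fst (fst (cc i))) (snd (fst (cc i)))).
 intros Z (sg & u & v & Hk & Hsg & HZ).
 destruct (Hcc ((u, v), sg)) as [i [Hi HQ]].
 { simpl. split; [split|]; auto; intros r Hr; destruct (Hk r Hr) as (K1 & K2 & _ & _); exact (conj (proj1 K1) (proj2 K1)) || exact (conj (proj1 K2) (proj2 K2)). }
 exists i. split; auto.
 destruct (cc i) as [[U V] S]. simpl in HQ |- *. destruct HQ as [[HU HV] [HS1 HS2]].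
 rewrite (frob_ext_b _ _ _ (fun a b => mat Rk sg u v a b - mat Rk S U V a b)) by (intros; rewrite HZ; auto).
 eapply Rle_trans; [apply (pert n1 n2 Rk sg S u U v V du dv)|].
 - intros r Hr. destruct (Hk r Hr) as (K1 & K2 & K3 & K4). destruct (HU r Hr); destruct (HV r Hr).
   repeat split; auto; lra.
 - pose proof (norm1_le Rk sg). pose proof (norm1_le Rk (fun j => sg j - S j)).
   unfold norm1 in *. assert (0 <= sqrt (INR Rk)) by apply sqrt_pos.
   assert (sqrt (INR Rk) * norm2 Rk sg <= sqrt (INR Rk) * G) by (apply Rmult_le_compat_l; auto).
   assert (sqrt (INR Rk) * norm2 Rk (fun j => sg j - S j) <= sqrt (INR Rk) * ds) by (apply Rmult_le_compat_l; auto).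
   assert (0 <= du + dv) by lra. nra.
Qed.


Lemma least_exists (P : nat -> Prop) k0 : P k0 -> exists k, P k /\ forall j, P j -> (k <= j)%nat.
Proof. revert k0. induction k0 as [n IH] using lt_wf_ind. intros Hn.
 destruct (classic (exists j, (j < n)%nat /\ P j)) as [[j [Hj Pj]]|Hno].
 - apply (IH j Hj Pj).
 - exists n. split; auto. intros j Pj. destruct (le_lt_dec n j) as [l|l]; auto. exfalso. apply Hno. exists j; split; auto.
Qed.

Lemma ln_0 : ln 0 = 0.
Proof. unfold ln. destruct (Rlt_dec 0 0) as [r|r]; [destruct (Rlt_irrefl 0 r)|auto]. Qed.

Lemma ln_INR_le a b : (a <= b)%nat -> (1 <= b)%nat -> ln (INR a) <= ln (INR b).
Proof. intros H1 H2. destruct a. simpl. rewrite ln_0. apply ln_nonneg. apply (le_INR 1); auto.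
 apply ln_le. apply lt_0_INR; lia. apply le_INR; auto. Qed.

Lemma ln_prod3 R ku kv ks : (1 <= ku)%nat -> (1 <= kv)%nat -> (1 <= ks)%nat ->
  ln (INR (ku ^ R * kv ^ R * ks)) = INR R * ln (INR ku) + INR R * ln (INR kv) + ln (INR ks).
Proof. intros H1 H2 H3. assert (0 < INR ku) by (apply lt_0_INR; lia).
 assert (0 < INR kv) by (apply lt_0_INR; lia). assert (0 < INR ks) by (apply lt_0_INR; lia).
 rewrite !mult_INR, !pow_INR. rewrite !ln_mult; try apply Rmult_lt_0_compat; try apply pow_lt; auto.
 rewrite !ln_pow; auto. Qed.

Lemma mat_zero Rk u v i j : mat Rk (fun _ => 0) u v i j = 0.
Proof. unfold mat. rewrite (rsum_ext _ _ (fun _ => 0)). apply rsum_const0. intros; ring. Qed.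

Lemma norm2_zero_diff n x : norm2 n (fun i => x i - x i) = 0.
Proof. unfold norm2. rewrite (rsum_ext _ _ (fun _ => 0)). rewrite rsum_const0. apply sqrt_0. intros; ring. Qed.

Lemma cover_trivial Rk G n1 n2 s1 s2 eps : 0 <= G -> sqrt (INR Rk) * G <= eps ->
  frob_covered_by n1 n2 (K_RG Rk G n1 n2 s1 s2) eps 1.
Proof. intros HG He. exists (fun _ _ _ => 0). intros Z (sg & u & v & Hk & Hsg & HZ).
 exists 0%nat. split; [lia|].
 rewrite (frob_ext_b _ _ _ (fun a b => mat Rk sg u v a b - mat Rk (fun _ => 0) u v a b)).
 2:{ intros. rewrite mat_zero, HZ; auto. }
 eapply Rle_trans; [apply (pert n1 n2 Rk sg (fun _ => 0) u u v v 0 0)|].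
 - intros r Hr. destruct (Hk r Hr) as (_ & _ & K3 & K4).
   rewrite (norm2_zero_diff n1 (u r)), (norm2_zero_diff n2 (v r)). repeat split; lra.
 - pose proof (norm1_le Rk sg). unfold norm1 in *.
   rewrite (rsum_ext _ (fun r => Rabs (sg r - 0)) (fun r => Rabs (sg r))) by (intros; rewrite Rminus_0_r; auto).
   assert (sqrt (INR Rk) * norm2 Rk sg <= sqrt (INR Rk) * G) by (apply Rmult_le_compat_l; auto; apply sqrt_pos).
   lra.
Qed.

Lemma sR_facts Rk : (1 <= Rk)%nat -> 1 <= sqrt (INR Rk) /\ sqrt (INR Rk) * sqrt (INR Rk) = INR Rk /\ 1 <= INR Rk.
Proof. intros H. assert (1 <= INR Rk) by (apply (le_INR 1); auto). split; [|split; auto].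
 rewrite <- sqrt_1. apply sqrt_le_1_alt; auto. apply sqrt_sqrt; lra. Qed.

Lemma unit_net_conv n s k d : net k (fun x => norm2 n x <= 1)
   (fun x c => norm2 n c <= 1 /\ norm2 n (fun j => x j - c j) <= 1 * d) ->
  net k (fun u => norm2 n u <= 1 /\ norm1 n u <= sqrt s)
        (fun u c => norm2 n c <= 1 /\ norm2 n (fun j => u j - c j) <= d).
Proof. intros H. eapply net_weak; [apply H| |].
 intros x [Hx _]; auto. intros x c _ [H1 H2]. split; auto; lra. Qed.

Lemma e_le3 : exp 1 <= 3.
Proof. apply exp_le_3. Qed.

Lemma base_le y c C : 0 < y < 1 -> 0 < c -> exp 1 * (1 + c / y) <= C / y -> ln (exp 1 * (1 + c / y)) <= ln (C / y).
Proof. intros Hy Hc H. apply ln_le; auto. apply Rmult_lt_0_compat. apply exp_pos.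
 assert (0 < c / y) by (unfold Rdiv; apply Rmult_lt_0_compat; [lra|apply Rinv_0_lt_compat; lra]). lra. Qed.

Lemma case1 Rk G s1 s2 n1 n2 eps : (1 <= Rk)%nat -> 1 <= G -> 0 < eps -> eps < 6 * G * sqrt (INR Rk) ->
  exists Kc, frob_covered_by n1 n2 (K_RG Rk G n1 n2 s1 s2) eps Kc /\ (1 <= Kc)%nat /\
  ln (INR Kc) <= INR Rk * (INR n1 + INR n2 + 1) * ln (36 * G * INR Rk / eps).
Proof. intros hR hG he0 he1. destruct (sR_facts Rk hR) as (HsR & HsR2 & HR1).
 set (sR := sqrt (INR Rk)) in *.
 assert (EL : 36 * G * INR Rk / eps = 36 * sR / (eps / (G * sR))) by (rewrite <- HsR2; field; repeat split; lra).
 assert (HL : 0 <= ln (36 * G * INR Rk / eps)).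
 { apply ln_nonneg. apply Rmult_le_reg_r with eps; auto. unfold Rdiv. rewrite Rmult_assoc, Rinv_l by lra.
   rewrite <- HsR2. nra. }
 assert (0 <= INR n1) by apply pos_INR. assert (0 <= INR n2) by apply pos_INR.
 destruct (Rle_lt_dec (sR * G) eps) as [Htr|Hy].
 - exists 1%nat. split; [apply cover_trivial; [lra|exact Htr]|]. split; [lia|]. simpl. rewrite ln_1.
   apply Rmult_le_pos; [nra|auto].
 - set (y := eps / (G * sR)). assert (Hy0 : 0 < y < 1).
   { unfold y. split. unfold Rdiv; apply Rmult_lt_0_compat; [lra|apply Rinv_0_lt_compat; nra].
     apply Rmult_lt_reg_r with (G * sR). nra. unfold Rdiv. rewrite Rmult_assoc, Rinv_l by nra. lra. }
   assert (Eeps : eps = y * (G * sR)) by (unfold y; field; nra). assert (Ey : y = eps / (G * sR)) by reflexivity. clearbody y.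
   destruct (vol_net n1 1 (y / 3) ltac:(lra) ltac:(lra)) as (ku & Hku & Lku & Nku).
   destruct (vol_net n2 1 (y / 3) ltac:(lra) ltac:(lra)) as (kv & Hkv & Lkv & Nkv).
   destruct (vol_net Rk G (y / 3) ltac:(lra) ltac:(lra)) as (ks & Hks & Lks & Nks).
   exists (ku ^ Rk * kv ^ Rk * ks)%nat. split; [|split].
   + apply (cover_from_nets _ _ _ _ _ _ _ _ _ _ (y / 3) (y / 3) (G * (y / 3))).
     apply unit_net_conv; auto. apply unit_net_conv; auto. auto. lra. lra.
     fold sR. rewrite Eeps. right. field.
   + pose proof (Nat.pow_le_mono_l 1 ku Rk Hku). pose proof (Nat.pow_le_mono_l 1 kv Rk Hkv).
     rewrite Nat.pow_1_l in *. nia.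
   + rewrite ln_prod3 by auto.
     assert (HB : ln (exp 1 * (1 + 2 / (y / 3))) <= ln (36 * G * INR Rk / eps)).
     { rewrite EL, <- Ey. replace (2 / (y / 3)) with (6 / y) by (field; lra).
       apply base_le; [lra|lra|]. pose proof e_le3. pose proof (exp_pos 1).
       replace (exp 1 * (1 + 6 / y)) with (exp 1 * (y + 6) / y) by (field; lra).
       unfold Rdiv. apply Rmult_le_compat_r. apply Rlt_le, Rinv_0_lt_compat; lra. nra. }
     set (L := ln (36 * G * INR Rk / eps)) in *.
     assert (ln (INR ku) <= INR n1 * L) by (eapply Rle_trans; [apply Lku| apply Rmult_le_compat_l; auto]).
     assert (ln (INR kv) <= INR n2 * L) by (eapply Rle_trans; [apply Lkv| apply Rmult_le_compat_l; auto]).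
     assert (ln (INR ks) <= INR Rk * L) by (eapply Rle_trans; [apply Lks| apply Rmult_le_compat_l; lra]).
     nra.
Qed.

Lemma A_ge18 Rk G s n eps : (1 <= Rk)%nat -> 1 <= G -> 1 <= s -> s <= INR n -> 0 < eps ->
  12 * G * sqrt (INR Rk * s / INR n) <= eps ->
  18 <= 9 * eps * INR n / (6 * G * sqrt (INR Rk) * s).
Proof. intros hR hG hs hsn he hc. destruct (sR_facts Rk hR) as (HsR & HsR2 & HR1).
 set (sR := sqrt (INR Rk)) in *.
 assert (Hn : 0 < INR n) by lra.
 set (q := sqrt (INR Rk * s / INR n)) in *.
 assert (Hq2 : q * q = INR Rk * s / INR n).
 { unfold q. apply sqrt_sqrt. unfold Rdiv. apply Rmult_le_pos; [nra|apply Rlt_le, Rinv_0_lt_compat; auto]. }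
 assert (Hq0 : 0 <= q) by apply sqrt_pos.
 assert (E : (q * INR n) * (q * INR n) = INR Rk * s * INR n).
 { replace ((q * INR n) * (q * INR n)) with ((q*q) * (INR n * INR n)) by ring. rewrite Hq2. field. lra. }
 assert (Hqn : sR * s <= q * INR n).
 { assert ((sR * s) * (sR * s) <= (q * INR n) * (q * INR n)).
   { rewrite E. replace (sR * s * (sR * s)) with ((sR * sR) * (s * s)) by ring. rewrite HsR2. nra. }
   destruct (Rle_lt_dec (sR * s) (q * INR n)) as [|Hlt]; auto. exfalso. assert (0 <= q * INR n) by (apply Rmult_le_pos; lra). assert (q * INR n * (q * INR n) < sR * s * (sR * s)) by (apply Rmult_le_0_lt_compat; lra). lra. }
 assert (Hp : 0 < 6 * G * sR * s) by (repeat apply Rmult_lt_0_compat; lra).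
 apply Rmult_le_reg_r with (6 * G * sR * s). exact Hp.
 replace (9 * eps * INR n / (6 * G * sR * s) * (6 * G * sR * s)) with (9 * eps * INR n) by (field; lra). assert (12 * G * (q * INR n) <= eps * INR n) by nra. assert (G * (sR * s) <= G * (q * INR n)) by (apply Rmult_le_compat_l; lra). nra.
Qed.

Lemma ln_ge1 A : 3 <= A -> 1 <= ln A.
Proof. intros H. rewrite <- (ln_exp 1). apply ln_le. apply exp_pos. pose proof e_le3. lra. Qed.

Lemma maurey_arith (s n y A G sR eps dl : R) : 1 <= s -> 0 < n -> 0 < y < 1 -> 0 < G -> 0 < sR ->
  eps = y * (G * sR) -> A = 9 * eps * n / (6 * G * sR * s) -> 18 <= A -> y / 4 <= dl ->
  (s / dl ^ 2 + 1) * ln A + 3 * n / A <= 144 * (s / y ^ 2) * ln A.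
Proof. intros hs hn hy hG hsR Ee EA HA Hdl.
 assert (HL : 1 <= ln A) by (apply ln_ge1; lra).
 assert (Hy2 : 0 < y ^ 2) by (apply pow_lt; lra).
 set (X := s / y ^ 2).
 assert (HX : 1 <= X). { unfold X. apply Rmult_le_reg_r with (y ^ 2); auto. unfold Rdiv. rewrite Rmult_assoc, Rinv_l by lra. simpl in *. nra. }
 assert (H1 : s / dl ^ 2 <= 16 * X).
 { unfold X. assert (0 < dl) by lra. assert (y ^ 2 <= 16 * dl ^ 2) by (simpl; nra).
   apply Rmult_le_reg_r with (dl ^ 2 * y ^ 2). apply Rmult_lt_0_compat; auto; apply pow_lt; lra.
   replace (s / dl ^ 2 * (dl ^ 2 * y ^ 2)) with (s * y ^ 2) by (field; lra).
   replace (16 * (s / y ^ 2) * (dl ^ 2 * y ^ 2)) with (s * (16 * dl ^ 2)) by (field; lra). nra. }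
 assert (H2 : 3 * n / A = 2 * s / y).
 { rewrite EA, Ee. field. repeat split; lra. }
 assert (H3 : 2 * s / y <= 2 * X).
 { unfold X. apply Rmult_le_reg_r with (y ^ 2); auto. replace (2 * s / y * y ^ 2) with (2 * s * y) by (field; lra).
   replace (2 * (s / y ^ 2) * y ^ 2) with (2 * s) by (field; lra). nra. }
 rewrite H2. assert (0 <= s / dl ^ 2) by (unfold Rdiv; apply Rmult_le_pos; [lra|apply Rlt_le, Rinv_0_lt_compat, pow_lt; lra]).
 nra.
Qed.

Lemma case2 Rk G s1 s2 n1 n2 eps : (1 <= Rk)%nat -> 1 <= G -> 0 < eps -> eps < 6 * G * sqrt (INR Rk) ->
  1 <= s1 -> s1 <= INR n1 ->
  12 * G * sqrt (INR Rk * s1 / INR n1) <= eps ->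
  exists Kc, frob_covered_by n1 n2 (K_RG Rk G n1 n2 s1 s2) eps Kc /\ (1 <= Kc)%nat /\
  ln (INR Kc) <= 144 * G ^ 2 * INR Rk ^ 2 * s1 / eps ^ 2
                       * ln (9 * eps * INR n1 / (6 * G * sqrt (INR Rk) * s1))
                     + INR Rk * (INR n2 + 1) * ln (36 * G * INR Rk / eps).
Proof. intros hR hG he0 he1 hs1 hs1n hc.
 pose proof (A_ge18 Rk G s1 n1 eps hR hG hs1 hs1n he0 hc) as HA.
 destruct (sR_facts Rk hR) as (HsR & HsR2 & HR1).
 set (sR := sqrt (INR Rk)) in *.
 set (A := 9 * eps * INR n1 / (6 * G * sR * s1)) in *.
 assert (HlA : 1 <= ln A) by (apply ln_ge1; lra).
 assert (EL : 36 * G * INR Rk / eps = 36 * sR / (eps / (G * sR))) by (rewrite <- HsR2; field; repeat split; lra).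
 assert (HL : 0 <= ln (36 * G * INR Rk / eps)).
 { apply ln_nonneg. apply Rmult_le_reg_r with eps; auto. unfold Rdiv. rewrite Rmult_assoc, Rinv_l by lra.
   rewrite <- HsR2. nra. }
 assert (0 <= INR n1) by apply pos_INR. assert (0 <= INR n2) by apply pos_INR.
 assert (HC : 0 <= 144 * G ^ 2 * INR Rk ^ 2 * s1 / eps ^ 2).
 { unfold Rdiv. apply Rmult_le_pos. repeat apply Rmult_le_pos; try lra; apply pow2_ge_0.
   apply Rlt_le, Rinv_0_lt_compat, pow_lt; lra. }
 destruct (Rle_lt_dec (sR * G) eps) as [Htr|Hy].
 - exists 1%nat. split; [apply cover_trivial; [lra|exact Htr]|]. split; [lia|]. change (INR 1) with 1. rewrite ln_1.
   assert (0 <= INR Rk * (INR n2 + 1) * ln (36 * G * INR Rk / eps)) by (apply Rmult_le_pos; [nra|auto]).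
   assert (0 <= 144 * G ^ 2 * INR Rk ^ 2 * s1 / eps ^ 2 * ln A) by (apply Rmult_le_pos; [exact HC|lra]). apply Rplus_le_le_0_compat; assumption.
 - set (y := eps / (G * sR)). assert (Hy0 : 0 < y < 1).
   { unfold y. split. unfold Rdiv; apply Rmult_lt_0_compat; [lra|apply Rinv_0_lt_compat; nra].
     apply Rmult_lt_reg_r with (G * sR). nra. unfold Rdiv. rewrite Rmult_assoc, Rinv_l by nra. lra. }
   assert (Eeps : eps = y * (G * sR)) by (unfold y; field; nra). assert (Ey : y = eps / (G * sR)) by reflexivity. clearbody y.
   destruct (maurey_net n1 s1 (y / 2) A hs1 ltac:(lra) ltac:(lra)) as (ku & Hku & Lku & Nku).
   destruct (vol_net n2 1 (y / 4) ltac:(lra) ltac:(lra)) as (kv & Hkv & Lkv & Nkv).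
   destruct (vol_net Rk G (y / 4) ltac:(lra) ltac:(lra)) as (ks & Hks & Lks & Nks).
   exists (ku ^ Rk * kv ^ Rk * ks)%nat. split; [|split].
   + apply (cover_from_nets _ _ _ _ _ _ _ _ _ _ (y / 2) (y / 4) (G * (y / 4))).
     auto. apply unit_net_conv; auto. auto. lra. lra.
     fold sR. rewrite Eeps. right. field.
   + pose proof (Nat.pow_le_mono_l 1 ku Rk Hku). pose proof (Nat.pow_le_mono_l 1 kv Rk Hkv).
     rewrite Nat.pow_1_l in *. nia.
   + rewrite ln_prod3 by auto.
     assert (HB : ln (exp 1 * (1 + 2 / (y / 4))) <= ln (36 * G * INR Rk / eps)).
     { rewrite EL, <- Ey. replace (2 / (y / 4)) with (8 / y) by (field; lra).
       apply base_le; [lra|lra|]. pose proof e_le3. pose proof (exp_pos 1).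
       replace (exp 1 * (1 + 8 / y)) with (exp 1 * (y + 8) / y) by (field; lra).
       unfold Rdiv. apply Rmult_le_compat_r. apply Rlt_le, Rinv_0_lt_compat; lra. nra. }
     set (L := ln (36 * G * INR Rk / eps)) in *.
     assert (Hu : ln (INR ku) <= 144 * (s1 / y ^ 2) * ln A).
     { eapply Rle_trans; [apply Lku|]. apply (maurey_arith s1 (INR n1) y A G sR eps (y / 2)); auto; lra. }
     assert (ln (INR kv) <= INR n2 * L) by (eapply Rle_trans; [apply Lkv| apply Rmult_le_compat_l; auto]).
     assert (ln (INR ks) <= INR Rk * L) by (eapply Rle_trans; [apply Lks| apply Rmult_le_compat_l; lra]).
     assert (EC : 144 * G ^ 2 * INR Rk ^ 2 * s1 / eps ^ 2 * ln A = INR Rk * (144 * (s1 / y ^ 2) * ln A)).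
     { rewrite Eeps. rewrite <- HsR2. field. repeat split; lra. }
     rewrite EC. nra.
Qed.

Lemma case3 Rk G s1 s2 n1 n2 eps : (1 <= Rk)%nat -> 1 <= G -> 0 < eps -> eps < 6 * G * sqrt (INR Rk) ->
  1 <= s1 -> s1 <= INR n1 -> 1 <= s2 -> s2 <= INR n2 -> s1 / INR n1 <= s2 / INR n2 ->
  12 * G * sqrt (INR Rk * s2 / INR n2) <= eps ->
  exists Kc, frob_covered_by n1 n2 (K_RG Rk G n1 n2 s1 s2) eps Kc /\ (1 <= Kc)%nat /\
  ln (INR Kc) <= 144 * G ^ 2 * INR Rk ^ 2 * (s1 + s2) / eps ^ 2
                       * ln (9 * eps * INR n1 / (6 * G * sqrt (INR Rk) * s1))
                     + INR Rk * ln (18 * G * INR Rk / eps).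
Proof. intros hR hG he0 he1 hs1 hs1n hs2 hs2n hrat hc.
 assert (hc1 : 12 * G * sqrt (INR Rk * s1 / INR n1) <= eps).
 { eapply Rle_trans; [|exact hc]. apply Rmult_le_compat_l; [lra|]. apply sqrt_le_1_alt.
   replace (INR Rk * s1 / INR n1) with (INR Rk * (s1 / INR n1)) by (field; lra).
   replace (INR Rk * s2 / INR n2) with (INR Rk * (s2 / INR n2)) by (field; lra).
   apply Rmult_le_compat_l; auto. apply pos_INR. }
 pose proof (A_ge18 Rk G s1 n1 eps hR hG hs1 hs1n he0 hc1) as HA.
 pose proof (A_ge18 Rk G s2 n2 eps hR hG hs2 hs2n he0 hc) as HA2.
 destruct (sR_facts Rk hR) as (HsR & HsR2 & HR1).
 set (sR := sqrt (INR Rk)) in *.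
 set (A := 9 * eps * INR n1 / (6 * G * sR * s1)) in *.
 set (A2 := 9 * eps * INR n2 / (6 * G * sR * s2)) in *.
 assert (HA21 : A2 <= A).
 { unfold A2, A. assert (s1 * INR n2 <= s2 * INR n1).
   { apply Rmult_le_reg_r with (/ (INR n1 * INR n2)). apply Rinv_0_lt_compat; nra.
     replace (s1 * INR n2 * / (INR n1 * INR n2)) with (s1 / INR n1) by (field; lra).
     replace (s2 * INR n1 * / (INR n1 * INR n2)) with (s2 / INR n2) by (field; lra). auto. }
   assert (Hp : 0 < 6 * G * sR * s1 * s2) by (repeat apply Rmult_lt_0_compat; lra).
   apply Rmult_le_reg_r with (6 * G * sR * s1 * s2); auto.
   replace (9 * eps * INR n2 / (6 * G * sR * s2) * (6 * G * sR * s1 * s2)) with (9 * eps * (s1 * INR n2)) by (field; lra).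
   replace (9 * eps * INR n1 / (6 * G * sR * s1) * (6 * G * sR * s1 * s2)) with (9 * eps * (s2 * INR n1)) by (field; lra).
   apply Rmult_le_compat_l; lra. }
 assert (HlA : 1 <= ln A) by (apply ln_ge1; lra).
 assert (HlA2 : 1 <= ln A2) by (apply ln_ge1; lra).
 assert (HlAA : ln A2 <= ln A) by (apply ln_le; lra).
 assert (EL : 18 * G * INR Rk / eps = 18 * sR / (eps / (G * sR))) by (rewrite <- HsR2; field; repeat split; lra).
 assert (HL : 0 <= ln (18 * G * INR Rk / eps)).
 { apply ln_nonneg. apply Rmult_le_reg_r with eps; auto. unfold Rdiv. rewrite Rmult_assoc, Rinv_l by lra.
   rewrite <- HsR2. nra. }
 assert (HC : 0 <= 144 * G ^ 2 * INR Rk ^ 2 * (s1 + s2) / eps ^ 2).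
 { unfold Rdiv. apply Rmult_le_pos. repeat apply Rmult_le_pos; try lra; apply pow2_ge_0.
   apply Rlt_le, Rinv_0_lt_compat, pow_lt; lra. }
 destruct (Rle_lt_dec (sR * G) eps) as [Htr|Hy].
 - exists 1%nat. split; [apply cover_trivial; [lra|exact Htr]|]. split; [lia|]. change (INR 1) with 1. rewrite ln_1.
   assert (0 <= INR Rk * ln (18 * G * INR Rk / eps)) by (apply Rmult_le_pos; lra).
   assert (0 <= 144 * G ^ 2 * INR Rk ^ 2 * (s1 + s2) / eps ^ 2 * ln A) by (apply Rmult_le_pos; [exact HC|lra]).
   apply Rplus_le_le_0_compat; assumption.
 - set (y := eps / (G * sR)). assert (Hy0 : 0 < y < 1).
   { unfold y. split. unfold Rdiv; apply Rmult_lt_0_compat; [lra|apply Rinv_0_lt_compat; nra].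
     apply Rmult_lt_reg_r with (G * sR). nra. unfold Rdiv. rewrite Rmult_assoc, Rinv_l by nra. lra. }
   assert (Eeps : eps = y * (G * sR)) by (unfold y; field; nra). assert (Ey : y = eps / (G * sR)) by reflexivity. clearbody y.
   destruct (maurey_net n1 s1 (y / 4) A hs1 ltac:(lra) ltac:(lra)) as (ku & Hku & Lku & Nku).
   destruct (maurey_net n2 s2 (y / 4) A2 hs2 ltac:(lra) ltac:(lra)) as (kv & Hkv & Lkv & Nkv).
   destruct (vol_net Rk G (y / 2) ltac:(lra) ltac:(lra)) as (ks & Hks & Lks & Nks).
   exists (ku ^ Rk * kv ^ Rk * ks)%nat. split; [|split].
   + apply (cover_from_nets _ _ _ _ _ _ _ _ _ _ (y / 4) (y / 4) (G * (y / 2))).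
     auto. auto. auto. lra. lra.
     fold sR. rewrite Eeps. right. field.
   + pose proof (Nat.pow_le_mono_l 1 ku Rk Hku). pose proof (Nat.pow_le_mono_l 1 kv Rk Hkv).
     rewrite Nat.pow_1_l in *. nia.
   + rewrite ln_prod3 by auto.
     assert (HB : ln (exp 1 * (1 + 2 / (y / 2))) <= ln (18 * G * INR Rk / eps)).
     { rewrite EL, <- Ey. replace (2 / (y / 2)) with (4 / y) by (field; lra).
       apply base_le; [lra|lra|]. pose proof e_le3. pose proof (exp_pos 1).
       replace (exp 1 * (1 + 4 / y)) with (exp 1 * (y + 4) / y) by (field; lra).
       unfold Rdiv. apply Rmult_le_compat_r. apply Rlt_le, Rinv_0_lt_compat; lra. nra. }
     set (L := ln (18 * G * INR Rk / eps)) in *.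
     assert (Hu : ln (INR ku) <= 144 * (s1 / y ^ 2) * ln A).
     { eapply Rle_trans; [apply Lku|]. apply (maurey_arith s1 (INR n1) y A G sR eps (y / 4)); auto; lra. }
     assert (Hv : ln (INR kv) <= 144 * (s2 / y ^ 2) * ln A).
     { eapply Rle_trans; [apply Lkv|]. eapply Rle_trans; [apply (maurey_arith s2 (INR n2) y A2 G sR eps (y / 4)); auto; lra|].
       apply Rmult_le_compat_l; auto. assert (0 < y ^ 2) by (apply pow_lt; lra).
       assert (0 <= s2 / y ^ 2) by (unfold Rdiv; apply Rmult_le_pos; [lra|apply Rlt_le, Rinv_0_lt_compat; auto]). lra. }
     assert (ln (INR ks) <= INR Rk * L) by (eapply Rle_trans; [apply Lks| apply Rmult_le_compat_l; lra]).
     assert (EC : 144 * G ^ 2 * INR Rk ^ 2 * (s1 + s2) / eps ^ 2 * ln A = INR Rk * (144 * (s1 / y ^ 2) * ln A) + INR Rk * (144 * (s2 / y ^ 2) * ln A)).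
     { rewrite Eeps. rewrite <- HsR2. field. repeat split; lra. }
     rewrite EC. nra.
Qed.


Theorem mainTheorem10 (Rk : nat) (Gamma s1 s2 : R) (n1 n2 : nat) (eps : R)
  (hR : (1 <= Rk)%nat) (hG : 1 <= Gamma)
  (hs1 : 1 <= s1) (hs1n : s1 <= INR n1)
  (hs2 : 1 <= s2) (hs2n : s2 <= INR n2)
  (hratio : s1 / INR n1 <= s2 / INR n2)
  (heps0 : 0 < eps) (heps1 : eps < 6 * Gamma * sqrt (INR Rk)) :
  exists k : nat,
    is_frob_covering_number n1 n2 (K_RG Rk Gamma n1 n2 s1 s2) eps k /\
    (eps < 12 * Gamma * sqrt (INR Rk * s1 / INR n1) ->
       ln (INR k) <= INR Rk * (INR n1 + INR n2 + 1)
                       * ln (36 * Gamma * INR Rk / eps)) /\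
    (12 * Gamma * sqrt (INR Rk * s1 / INR n1) <= eps ->
     eps < 12 * Gamma * sqrt (INR Rk * s2 / INR n2) ->
       ln (INR k) <= 144 * Gamma ^ 2 * INR Rk ^ 2 * s1 / eps ^ 2
                       * ln (9 * eps * INR n1 / (6 * Gamma * sqrt (INR Rk) * s1))
                     + INR Rk * (INR n2 + 1) * ln (36 * Gamma * INR Rk / eps)) /\
    (12 * Gamma * sqrt (INR Rk * s2 / INR n2) <= eps ->
       ln (INR k) <= 144 * Gamma ^ 2 * INR Rk ^ 2 * (s1 + s2) / eps ^ 2
                       * ln (9 * eps * INR n1 / (6 * Gamma * sqrt (INR Rk) * s1))
                     + INR Rk * ln (18 * Gamma * INR Rk / eps)).
Proof.
  destruct (case1 Rk Gamma s1 s2 n1 n2 eps hR hG heps0 heps1) as (K1 & HK1 & HK1p & LK1).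
  destruct (least_exists _ K1 HK1) as (N & HN & Hmin).
  exists N. split; [split; auto|]. split; [|split].
  - intros _. eapply Rle_trans; [apply ln_INR_le; [apply Hmin; exact HK1| exact HK1p]|]. exact LK1.
  - intros Hc _. destruct (case2 Rk Gamma s1 s2 n1 n2 eps hR hG heps0 heps1 hs1 hs1n Hc) as (K & HK & HKp & LK).
    eapply Rle_trans; [apply ln_INR_le; [apply Hmin; exact HK| exact HKp]|]. exact LK.
  - intros Hc. destruct (case3 Rk Gamma s1 s2 n1 n2 eps hR hG heps0 heps1 hs1 hs1n hs2 hs2n hratio Hc) as (K & HK & HKp & LK).
    eapply Rle_trans; [apply ln_INR_le; [apply Hmin; exact HK| exact HKp]|]. exact LK.
Qed.
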